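(* Let $(X,\perp,R)$ be a monadic orthoframe. Then for every $A\subseteq X$: (1) $R[A]^\perp$ is closed under $R$, i.e. $R[R[A]^\perp]=R[A]^\perp$; (2) $R[A]^{\perp\perp}$ is closed under $R$, i.e. $R[R[A]^{\perp\perp}]=R[A]^{\perp\perp}$; (3) $R[A^{\perp\perp}]\subseteq R[A]^{\perp\perp}$.
   Context: An orthoframe $(X,\perp)$ is a set with an irreflexive symmetric binary relation $\perp$; for $A\subseteq X$, $A^\perp=\{x\in X: a\perp x\text{ for all }a\in A\}$. For a binary relation $R$ on $X$ and $A\subseteq X$, $R[A]=\{y: x\,R\,y\text{ for some }x\in A\}$. A monadic orthoframe is $(X,\perp,R)$ with (M1) $\perp$ an orthogonality relation; (M2) $R$ reflexive and transitive; (M3) for each $x\in X$, $R[R[\{x\}]^\perp]\subseteq R[\{x\}]^\perp$. *)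

(* Defs.v *)
Definition set_incl {X : Type} (A B : X -> Prop) : Prop := forall x, A x -> B x.
Definition set_eq {X : Type} (A B : X -> Prop) : Prop := set_incl A B /\ set_incl B A.

Definition orthogonality {X : Type} (perp : X -> X -> Prop) : Prop :=
  (forall x, ~ perp x x) /\ (forall x y, perp x y -> perp y x).

Definition orth {X : Type} (perp : X -> X -> Prop) (A : X -> Prop) : X -> Prop :=
  fun x => forall a, A a -> perp a x.

Definition img {X : Type} (R : X -> X -> Prop) (A : X -> Prop) : X -> Prop :=
  fun y => exists x, A x /\ R x y.

Definition singleton {X : Type} (x : X) : X -> Prop := fun y => y = x.

Definition monadic_orthoframe {X : Type} (perp R : X -> X -> Prop) : Prop :=
  orthogonality perp /\
  (forall x, R x x) /\ (forall x y z, R x y -> R y z -> R x z) /\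
  (forall x, set_incl (img R (orth perp (img R (singleton x))))
                      (orth perp (img R (singleton x)))).

(* Main.v *)
Require Import Defs.

Theorem mainTheorem17 (X : Type) (perp R : X -> X -> Prop)
  (H : monadic_orthoframe perp R) (A : X -> Prop) :
  set_eq (img R (orth perp (img R A))) (orth perp (img R A)) /\
  set_eq (img R (orth perp (orth perp (img R A)))) (orth perp (orth perp (img R A))) /\
  set_incl (img R (orth perp (orth perp A))) (orth perp (orth perp (img R A))).
Proof.
  destruct H as [[Hirr Hsym] [Hrefl [Htr HM]]].
  unfold set_eq, set_incl, img, orth, singleton in *.
  assert (P1 : forall y, (exists x, (forall a, (exists x0, A x0 /\ R x0 a) -> perp a x) /\ R x y) ->
     forall a, (exists x0, A x0 /\ R x0 a) -> perp a y).
  { intros y [x [Hx Hxy]] a [a0 [Ha0 Ha0a]].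
    assert (Hm := HM a y). simpl in Hm.
    apply Hm; [| exists a; split; [reflexivity | apply Hrefl]].
    exists x; split; [| exact Hxy].
    intros b [c [-> Hab]]. apply Hx. exists a0; split; [exact Ha0|]. eapply Htr; eauto. }
  split; [split; [exact P1 | intros y Hy; exists y; split; [exact Hy | apply Hrefl]]|].
  split; [split|].
  - intros y [x [Hx Hxy]] z Hz.
    apply (HM z y); [| exists z; split; [reflexivity | apply Hrefl]].
    exists x; split; [| exact Hxy].
    intros b [c [-> Hzb]]. apply Hx.
    apply P1. exists z; split; assumption.
  - intros y Hy; exists y; split; [exact Hy | apply Hrefl].
  - intros y [x [Hx Hxy]] z Hz.
    apply (HM z y); [| exists z; split; [reflexivity | apply Hrefl]].
    exists x; split; [| exact Hxy].
    intros b [c [-> Hzb]]. apply Hx.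
    intros a Ha. apply (P1 b).
    + exists z; split; assumption.
    + exists a; split; [exact Ha | apply Hrefl].
Qed.
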